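(* Let $W=\langle s,t: s^2=t^2=(st)^m=1\rangle$ be a Coxeter group of rank $2$ with $S=\{s,t\}$, $m\ge2$ the order of $st$, and $w_0$ its longest element. Then the right $W$-module $e_S\mathbb CW$ affords the character $\Phi_S=\operatorname{Ind}_{\langle w_0\rangle}^W(1)-1_S$.
   Context: $1_S$ is the trivial character of $W$. For $J\subseteq S$: $X_J=\{w\in W:\ell(rw)>\ell(w)\ \forall r\in J\}$, $x_J=\sum_{x\in X_J}x^{-1}$, $X_J^\sharp=\{x\in X_J:x^{-1}Jx\subseteq S\}$; $m_{KL}=|X_K\cap X_L^\sharp|$ if $L\subseteq K$ and $0$ otherwise; the elements $e_L$ are defined by $x_K=\sum_{L\subseteq S}m_{KL}e_L$ for all $K\subseteq S$. *)

(* Defs.v *)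
From HB Require Import structures.
From mathcomp Require Import all_boot all_order all_algebra all_fingroup all_solvable all_field all_character.
Set Implicit Arguments. Unset Strict Implicit. Unset Printing Implicit Defensive.
Import GRing.Theory Num.Theory.
Local Open Scope ring_scope.
Local Open Scope group_scope.

Section Coxeter.
Variables (gT : finGroupType) (S : {set gT}).

Fixpoint words (n : nat) : {set gT} :=
  if n is n'.+1 then [set x * y | x in words n', y in S] else [set 1].

(* word length w.r.t. S: least n with w a product of n generators
   (lengths in a finite group generated by S are < #|gT|) *)
Definition ell (w : gT) : nat := find (fun n => w \in words n) (iota 0 #|gT|).

Definition Xset (J : {set gT}) : {set gT} :=
  [set w | [forall r in J, ell w < ell (r * w)]%N].

Definition Xsharp (J : {set gT}) : {set gT} :=
  [set x in Xset J | (J :^ x) \subset S].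

Definition mcoef (K L : {set gT}) : nat :=
  if L \subset K then #|Xset K :&: Xsharp L| else 0%N.

End Coxeter.

(* The complex group algebra CW, elements are functions W -> C *)
Definition CW (gT : finGroupType) := {ffun gT -> algC^o}.

Section GroupAlgebra.
Variable gT : finGroupType.

Definition gdelta (g : gT) : CW gT := [ffun x => if x == g then 1%R else 0%R].

Definition gmul (a b : CW gT) : CW gT :=
  [ffun z => (\sum_(x : gT) a x * b ((x^-1 * z)%g))%R].

Definition xsum (S J : {set gT}) : CW gT :=
  (\sum_(x in Xset S J) gdelta (x^-1)%g)%R.

Definition rideal (e : CW gT) : {vspace CW gT} :=
  <<[seq gmul e (gdelta g) | g : gT]>>%VS.

(* character of the right W-module U (U stable under right multiplication):
   trace of v |-> v * g on U *)
Definition rchar (U : {vspace CW gT}) (g : gT) : algC :=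
  (\sum_(i < \dim U) coord (vbasis U) i (gmul (vbasis U)`_i (gdelta g)))%R.

End GroupAlgebra.

(* Main.v *)
Require Import Defs.
From HB Require Import structures.
From mathcomp Require Import all_boot all_order all_algebra all_fingroup all_solvable all_field all_character.
From mathcomp Require Import zify ring.
Import GRing.Theory Num.Theory.
Set Implicit Arguments. Unset Strict Implicit. Unset Printing Implicit Defensive.
Lemma dvd_lt m n : (n < m)%N -> (m %| n) = (n == 0%N).
Proof.
move=> lt; apply/idP/idP => [d|/eqP ->]; last by rewrite dvdn0.
case: n d lt => // n d lt; move: (dvdn_leq (isT : 0 < n.+1)%N d); lia.
Qed.

Lemma dvd_small m n : (0 < m)%N -> (n < m.*2)%N -> (m %| n) = (n == 0%N) || (n == m).
Proof.
move=> m0 nlt; case: (ltnP n m) => [lt|le].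
  rewrite dvd_lt //; lia.
have e : n = (m + (n - m))%N by lia.
rewrite {1}e dvdn_addr // dvd_lt; lia.
Qed.

Lemma mod1_small m n : (1 < m)%N -> (n < m.*2)%N ->
  (n == 1 %[mod m]) = (n == 1%N) || (n == m.+1).
Proof.
move=> m1 nlt; rewrite (modn_small m1); case: (ltnP n m) => [lt|le].
  rewrite modn_small //; lia.
have e : n = (m + (n - m))%N by lia.
rewrite e modnDl modn_small; lia.
Qed.

Lemma N1 m : (1 < m)%N ->
  #|[set k : 'I_m | (m %| k.*2) || (k.*2 == 1 %[mod m])]| = 2%N.
Proof.
move=> m1.
have j0 : (0 < m)%N by lia.
have oh := odd_double_half m.
have oh1 : (odd m <= 1)%N by case: (odd m).
have jlt : (uphalf m < m)%N by rewrite uphalf_half; lia.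
rewrite (_ : [set k | _] = [set Ordinal j0; Ordinal jlt]).
  have ne : (0 != uphalf m)%N by rewrite uphalf_half; apply/eqP; lia.
  by rewrite cards2 -val_eqE /= ne.
apply/setP => k; rewrite !inE -!val_eqE /=.
have klt := ltn_ord k.
rewrite dvd_small ?mod1_small ?uphalf_half; lia.
Qed.

Lemma N2 m : (1 < m)%N ->
  #|[set k : 'I_m | (m %| k.*2) || (m %| k.*2.+1)]| = 2%N.
Proof.
move=> m1.
have j0 : (0 < m)%N by lia.
have oh := odd_double_half m.
have oh1 : (odd m <= 1)%N by case: (odd m).
have jlt : (m./2 < m)%N by lia.
rewrite (_ : [set k | _] = [set Ordinal j0; Ordinal jlt]).
  have ne : (0 != m./2)%N by apply/eqP; lia.
  by rewrite cards2 -val_eqE /= ne.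
apply/setP => k; rewrite !inE -!val_eqE /=.
have klt := ltn_ord k.
rewrite dvd_small ?(dvd_small _ (n := k.*2.+1)); lia.
Qed.

Section Words.
Variables (gT : finGroupType) (S : {set gT}).
Hypothesis Sinv : forall r, r \in S -> (r * r = 1)%g.
Local Open Scope group_scope.

Lemma Sinvg r : r \in S -> r^-1 = r.
Proof. by move=> rS; apply: (mulgI r); rewrite mulgV Sinv. Qed.

Lemma words0 x : (x \in words S 0) = (x == 1).
Proof. by rewrite /= inE. Qed.

Lemma words_mulr n y r : y \in words S n -> r \in S -> y * r \in words S n.+1.
Proof. by move=> yw rS /=; apply: imset2_f. Qed.

Lemma words_mulrP n x : x \in words S n.+1 ->
  exists2 y, y \in words S n & exists2 r, r \in S & x = y * r.
Proof. by case/imset2P=> y r yw rS ->; exists y => //; exists r. Qed.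

Lemma words_mull n y r : y \in words S n -> r \in S -> r * y \in words S n.+1.
Proof.
elim: n y => [|n IH] y yw rS.
  move: yw; rewrite words0 => /eqP ->; rewrite mulg1 -[r]mul1g.
  by apply: words_mulr; rewrite // words0.
case/words_mulrP: yw => y' y'w [r' r'S ->].
by rewrite mulgA; apply: words_mulr => //; apply: IH.
Qed.

Lemma words_mullP n x : x \in words S n.+1 ->
  exists2 r, r \in S & exists2 y, y \in words S n & x = r * y.
Proof.
elim: n x => [|n IH] x.
  case/words_mulrP=> y; rewrite words0 => /eqP -> [r rS ->].
  by exists r => //; exists 1; rewrite ?words0 ?mulg1 ?mul1g.
case/words_mulrP=> y /IH [r rS [y' y'w ->]] [r' r'S ->].
by exists r => //; exists (y' * r'); rewrite ?mulgA //; apply: words_mulr.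
Qed.

Lemma words_inv n x : x \in words S n -> x^-1 \in words S n.
Proof.
elim: n x => [|n IH] x.
  by rewrite !words0 => /eqP ->; rewrite invg1.
case/words_mulrP=> y /IH yw [r rS ->].
by rewrite invMg Sinvg //; apply: words_mull.
Qed.

Hypothesis Sex : forall w, exists2 n, (n < #|gT|)%N & w \in words S n.

Lemma ellP w : w \in words S (ell S w) /\ (ell S w < #|gT|)%N.
Proof.
have Hh : has (fun n => w \in words S n) (iota 0 #|gT|).
  case: (Sex w) => n nlt wn; apply/hasP; exists n => //.
  by rewrite mem_iota.
have := Hh; rewrite has_find size_iota => lt.
split=> //; have := nth_find 0 Hh; rewrite nth_iota ?size_iota //.
Qed.

Lemma ell_min n w : w \in words S n -> (ell S w <= n)%N.
Proof.
move=> wn; case: (leqP #|gT| n) => [le|lt].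
  by case: (ellP w) => _ h; apply: ltnW; apply: leq_trans h le.
rewrite leqNgt; apply/negP => lt2.
have := before_find 0 lt2; rewrite nth_iota ?add0n ?wn //.
Qed.

Lemma ell1 : ell S 1 = 0%N.
Proof. by apply/eqP; rewrite -leqn0; apply: ell_min; rewrite words0. Qed.

Lemma ell_eq0 w : ell S w = 0%N -> w = 1.
Proof. by move=> h; case: (ellP w); rewrite h words0 => /eqP. Qed.

Lemma ell_mull r w : r \in S -> (ell S (r * w) <= (ell S w).+1)%N.
Proof. by move=> rS; apply: ell_min; apply: words_mull => //; case: (ellP w). Qed.

Lemma ell_mull2 r w : r \in S -> (ell S w <= (ell S (r * w)).+1)%N.
Proof.
by move=> rS; have := ell_mull (r * w) rS; rewrite mulgA Sinv // mul1g.
Qed.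

Lemma ell_inv w : ell S w^-1 = ell S w.
Proof.
apply/eqP; rewrite eqn_leq; apply/andP; split; apply: ell_min.
  by apply: words_inv; case: (ellP w).
by rewrite -{1}[w]invgK; apply: words_inv; case: (ellP w^-1).
Qed.

Lemma ell_desc w : w != 1 -> exists2 r, r \in S & (ell S (r * w) < ell S w)%N.
Proof.
move=> w1; case: (ellP w); case E: (ell S w) => [|n].
  by move=> _; case/eqP: w1; apply: ell_eq0.
move=> /words_mullP [r rS [y yw ->]] _; exists r => //.
by rewrite mulgA Sinv // mul1g ltnS; apply: ell_min.
Qed.

End Words.
Section Dihedral.
Variables (gT : finGroupType) (s t : gT) (m : nat).
Hypotheses (hs : #[s]%g = 2%N) (ht : #[t]%g = 2%N) (hst : #[(s * t)%g]%g = m)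
  (hm : (2 <= m)%N) (hgen : <<[set s; t]>>%g = [set: gT]).
Local Open Scope group_scope.
Local Notation S := [set s; t].
Local Notation a := (s * t).
Local Notation A := <[s * t]>.

Lemma inv2 (x : gT) : #[x] = 2%N -> x * x = 1.
Proof. by move=> h; have := expg_order x; rewrite h expgS expg1. Qed.

Lemma ss : s * s = 1. Proof. exact: inv2. Qed.
Lemma tt : t * t = 1. Proof. exact: inv2. Qed.

Lemma SinvD r : r \in S -> r * r = 1.
Proof. by rewrite !inE => /orP [] /eqP ->; apply: inv2. Qed.

Lemma ord2_neq1 (x : gT) : #[x] = 2%N -> x != 1.
Proof. by move=> h; apply/eqP => x1; move: h; rewrite x1 order1. Qed.

Lemma s_neq_t : s != t.
Proof.
apply/eqP => e; move: hst; rewrite e inv2 // order1 => m1.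
by move: hm; rewrite -m1.
Qed.

Lemma sV : s^-1 = s. Proof. by apply: (Sinvg SinvD); rewrite !inE eqxx. Qed.
Lemma tV : t^-1 = t. Proof. by apply: (Sinvg SinvD); rewrite !inE eqxx orbT. Qed.

Lemma aV : a^-1 = t * s. Proof. by rewrite invMg sV tV. Qed.

Lemma conjA x : x \in A -> s * x = x^-1 * s.
Proof.
case/cycleP=> i ->.
have e : a ^ s = a^-1 by rewrite aV conjgE sV !mulgA ss mul1g.
have : (a ^+ i) ^ s = (a ^+ i)^-1 by rewrite conjXg e expgVn.
by rewrite conjgE sV => <-; rewrite !mulgA -(mulgA _ s s) ss mulg1.
Qed.

Lemma sNA : s \notin A.
Proof.
apply/negP => sA.
have tA : t \in A.
  suff : s * a \in A by rewrite mulgA ss mul1g.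
  by rewrite groupM ?cycle_id.
have ct : s * t = t * s by rewrite conjA // tV.
have a2 : a ^+ 2 = 1.
  by rewrite expgS expg1 {2}ct -mulgA (mulgA t) tt mul1g ss.
have m2 : m = 2%N.
  apply/eqP; rewrite eqn_leq hm andbT -hst; apply: dvdn_leq => //.
  by rewrite order_dvdn a2.
move: sA; case/cycleP => i si.
move: si; rewrite -expg_mod_order hst m2.
have : (i %% 2 < 2)%N by rewrite ltn_mod.
case: (i %% 2)%N => [|[|//]] _; rewrite ?expg0 ?expg1.
  by move=> e; move: (ord2_neq1 hs); rewrite e eqxx.
move/(congr1 (mulg s^-1)); rewrite mulVg mulKg => e.
by move: (ord2_neq1 ht); rewrite -e eqxx.
Qed.

Lemma tNA : t \notin A.
Proof.
apply/negP => tA; have : s * t * t \in A by rewrite groupM ?cycle_id.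
by rewrite -mulgA tt mulg1 (negPf sNA).
Qed.

Lemma rNA r : r \in S -> r \notin A.
Proof. by rewrite !inE => /orP [] /eqP ->; rewrite ?sNA ?tNA. Qed.

Lemma yt y : y * t = (y * s) * a.
Proof. by rewrite -!mulgA (mulgA s) ss mul1g. Qed.

Lemma cover x : (x \in A) || (x * s \in A).
Proof.
have: x \in <<S>> by rewrite hgen inE.
case/gen_prodgP => n [c cS ->]; elim: n c cS => [|n IH] c cS.
  by rewrite big_ord0 group1.
rewrite big_ord_recr /=; set y := \prod_(i < n) _.
have : (y \in A) || (y * s \in A) by apply: IH => i.
have := cS ord_max; rewrite !inE => /orP [] /eqP ->.
  case/orP => h; apply/orP; [right | left] => //.
  by rewrite -mulgA ss mulg1.
case/orP => h; apply/orP.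
  by right; rewrite -mulgA -aV groupM ?groupV ?cycle_id.
by left; rewrite (yt y) groupM ?cycle_id.
Qed.

Lemma par_r r y : r \in S -> (y * r \in A) = (y \notin A).
Proof.
move=> rS; case yA: (y \in A) => /=.
  apply/negP => h; have := rNA rS; rewrite -[r]mul1g -(mulVg y) -mulgA.
  by rewrite groupM ?groupV.
have := cover y; rewrite yA /= => ysA.
move: rS; rewrite !inE => /orP [] /eqP -> //.
by rewrite (yt y) groupM ?cycle_id.
Qed.

Lemma par_l r y : r \in S -> (r * y \in A) = (y \notin A).
Proof.
move=> rS; rewrite -[r * y \in A]groupV invMg (Sinvg SinvD rS) (par_r _ rS).
by rewrite groupV.
Qed.

Lemma words_par n x : x \in words S n -> (x \in A) = ~~ odd n.
Proof.
elim: n x => [|n IH] x; first by rewrite words0 => /eqP ->; rewrite group1.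
by case/words_mulrP=> y /IH yw [r rS ->]; rewrite par_r // yw /= negbK.
Qed.

Lemma cardA : #|A| = m.
Proof. by rewrite -hst. Qed.

Lemma card2m : (m.*2 <= #|gT|)%N.
Proof.
have dis : A :&: (A :* s) = set0.
  apply/setP => x; rewrite !inE mem_rcoset; apply/negP => /andP [xA xsA].
  have : x^-1 * (x * s^-1) \in A by rewrite groupM ?groupV.
  by rewrite mulKg groupV (negPf sNA).
have := cardsUI A (A :* s); rewrite dis cards0 addn0 card_rcoset cardA addnn.
by move <-; apply: max_card.
Qed.

Lemma wordsA k : a ^+ k \in words S k.*2.
Proof.
elim: k => [|k IH]; first by rewrite expg0 words0.
rewrite expgSr doubleS mulgA; apply: words_mulr; last by rewrite !inE eqxx orbT.
by apply: words_mulr => //; rewrite !inE eqxx.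
Qed.

Lemma Sex w : exists2 n, (n < #|gT|)%N & w \in words S n.
Proof.
have aux : forall y, y \in A -> exists2 k, (k < m)%N & y = a ^+ k.
  move=> y /cycleP [i ->]; exists (i %% m)%N; last by rewrite -hst expg_mod_order.
  by rewrite ltn_mod; case: m hm.
have := card2m; case/orP: (cover w) => /aux [k km e] le.
  exists k.*2; last by rewrite e wordsA.
  by apply: leq_trans le; rewrite ltn_double.
exists k.*2.+1; first by apply: leq_trans le; rewrite ltn_Sdouble.
have -> : w = a ^+ k * s by rewrite -e -mulgA ss mulg1.
by apply: words_mulr; rewrite ?wordsA // !inE eqxx.
Qed.


Let ellP' := ellP Sex.
Let ell_min' := ell_min Sex.

Lemma ell_neq r w : r \in S -> ell S (r * w) != ell S w.
Proof.
move=> rS; apply/eqP => e.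
have h1 := words_par (proj1 (ellP' (r * w))).
have h2 := words_par (proj1 (ellP' w)).
by move: h1; rewrite par_l // h2 e negbK; case: (odd _).
Qed.

Lemma ell_mulS r w : r \in S ->
  ell S (r * w) = (ell S w).+1 \/ ell S w = (ell S (r * w)).+1.
Proof.
move=> rS; have h1 := ell_mull Sex w rS; have h2 := ell_mull2 SinvD Sex w rS.
have h3 := ell_neq w rS; lia.
Qed.

Lemma inX1 r w : (w \in Xset S [set r]) = (ell S w < ell S (r * w))%N.
Proof.
rewrite inE; apply/forall_inP/idP => [h|h r']; first by apply: h; rewrite inE.
by move/set1P ->.
Qed.

Lemma Xflip r w : r \in S -> (r * w \in Xset S [set r]) = (w \notin Xset S [set r]).
Proof.
move=> rS; rewrite !inX1 mulgA SinvD // mul1g.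
by case: (ell_mulS w rS) => ->; rewrite ltnSn /= ?ltnn ?ltnNge ?leqnSn.
Qed.

Lemma halfX (T : {set gT}) r : r \in S -> (forall x, x \in T -> r * x \in T) ->
  (#|T :&: Xset S [set r]| * 2 = #|T|)%N.
Proof.
move=> rS cl.
have e : T :\: Xset S [set r] = (mulg r) @: (T :&: Xset S [set r]).
  apply/setP => y; rewrite in_setD; apply/andP/imsetP.
    case=> yX yT; exists (r * y); last by rewrite mulgA SinvD // mul1g.
    by rewrite in_setI cl // Xflip.
  case=> x; rewrite in_setI => /andP [xT xX] ->; split; last exact: cl.
  by rewrite Xflip // xX.
rewrite -(cardsID (Xset S [set r]) T) e card_imset; last exact: mulgI.
by rewrite muln2 addnn.
Qed.

Lemma cardX r : r \in S -> (#|Xset S [set r]| * 2 = #|gT|)%N.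
Proof.
move=> rS; have := halfX (T := setT) rS (fun x _ => in_setT _).
by rewrite setTI cardsT.
Qed.

Lemma r_neq1 r : r \in S -> r != 1.
Proof. by rewrite !inE => /orP [] /eqP ->; apply: ord2_neq1. Qed.

Lemma ell_r r : r \in S -> (0 < ell S r)%N.
Proof.
move=> rS; rewrite lt0n; apply/eqP => h.
by move: (r_neq1 rS); rewrite (ell_eq0 Sex h) eqxx.
Qed.

Lemma one_Xset (L : {set gT}) : L \subset S -> 1 \in Xset S L.
Proof.
move=> LS; rewrite inE; apply/forall_inP => r rL.
by rewrite mulg1 (ell1 Sex) ell_r // (subsetP LS).
Qed.

Lemma one_Xsharp (L : {set gT}) : L \subset S -> 1 \in Xsharp S L.
Proof. by move=> LS; rewrite in_set one_Xset // conjsg1. Qed.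

Lemma Xset0 : Xset S set0 = setT.
Proof. by apply/setP => w; rewrite !inE; apply/forall_inP => r; rewrite inE. Qed.

Lemma Xsharp0 : Xsharp S set0 = setT.
Proof. by apply/setP => w; rewrite in_set Xset0 conj0g sub0set !in_setT. Qed.

Lemma both_desc w : w \in Xset S [set s] -> w \in Xset S [set t] -> w = 1.
Proof.
move=> hs' ht'; apply/eqP; apply/negP => /negP w1.
case: (ell_desc SinvD Sex w1) => r; rewrite !inE => /orP [] /eqP -> lt.
  by move: hs'; rewrite inX1 ltnNge ltnW.
by move: ht'; rewrite inX1 ltnNge ltnW.
Qed.

Lemma XsetS : Xset S S = [set 1].
Proof.
apply/setP => w; rewrite in_set1; apply/idP/eqP => [h|->]; last exact: one_Xset (subxx _).
apply: both_desc; rewrite in_set; apply/forall_inP => r /set1P ->;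
  move: h; rewrite in_set => /forall_inP; apply; by rewrite !inE eqxx ?orbT.
Qed.

Lemma Aenum y : y \in A -> exists k : 'I_m, y = a ^+ k.
Proof.
case/cycleP => i ->; have mp : (0 < m)%N by case: m hm.
by exists (Ordinal (ltn_pmod i mp)); rewrite /= -hst expg_mod_order.
Qed.

Lemma conj_inA x : x \in A -> s ^ x = x^-1 * x^-1 * s.
Proof. by move=> xA; rewrite conjgE -mulgA conjA // mulgA. Qed.

Lemma conj_coset x : x \in A -> s ^ (x * s) = x * x * s.
Proof.
move=> xA; rewrite conjgE invMg sV.
have e : s * x^-1 = x * s by rewrite conjA ?groupV // invgK.
by rewrite e !mulgA -(mulgA x s s) ss mulg1.
Qed.

Lemma eq_mul_s y z : (y * s == z) = (y == z * s).
Proof.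
by apply/eqP/eqP => [<-|->]; rewrite -mulgA ss mulg1.
Qed.

Lemma eq_pow_a n : (a ^+ n == 1) = (m %| n).
Proof. by rewrite -order_dvdn hst. Qed.

Lemma PA k : (s ^ (a ^+ k) \in S) = (m %| k.*2) || (k.*2 == 1 %[mod m]).
Proof.
rewrite conj_inA ?mem_cycle // !inE !eq_mul_s ss -aV -invMg -expgD addnn.
rewrite invg_eq1 (inj_eq invg_inj) eq_pow_a.
by rewrite -{2}[a]expg1 eq_expg_mod_order hst.
Qed.

Lemma PC k : (s ^ (a ^+ k * s) \in S) = (m %| k.*2) || (m %| k.*2.+1).
Proof.
rewrite conj_coset ?mem_cycle // !inE !eq_mul_s ss -aV -expgD addnn.
by rewrite eq_pow_a eq_mulgV1 invgK -expgSr eq_pow_a.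
Qed.

Lemma cardT : #|[set x | s ^ x \in S]| = 4%N.
Proof.
set T := [set x | s ^ x \in S].
have inj1 : injective (fun k : 'I_m => a ^+ k).
  move=> i j /eqP; rewrite eq_expg_mod_order hst !modn_small //.
  by move/eqP => h; apply: val_inj.
have inj2 : injective (fun k : 'I_m => a ^+ k * s).
  by move=> i j /mulIg /inj1.
have e1 : T :&: A = (fun k : 'I_m => a ^+ k) @: [set k : 'I_m | s ^ (a ^+ k) \in S].
  apply/setP => y; rewrite in_setI; apply/andP/imsetP.
    by case=> yT /Aenum [k e]; exists k => //; move: yT; rewrite !inE e.
  by case=> k; rewrite in_set => h ->; split; rewrite ?mem_cycle // /T in_set.
have e2 : T :\: A = (fun k : 'I_m => a ^+ k * s) @: [set k : 'I_m | s ^ (a ^+ k * s) \in S].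
  apply/setP => y; rewrite in_setD; apply/andP/imsetP.
    case=> yA yT; have := cover y; rewrite (negPf yA) /= => /Aenum [k e].
    exists k; last by rewrite -e -mulgA ss mulg1.
    by move: yT; rewrite /T !in_set -e -mulgA ss mulg1.
  case=> k; rewrite in_set => h ->; split; last by rewrite /T in_set.
  by rewrite par_r ?mem_cycle // !inE eqxx.
rewrite -(cardsID A T) e1 e2 !card_imset //.
have -> : [set k : 'I_m | s ^ (a ^+ k) \in S] =
    [set k : 'I_m | (m %| k.*2) || (k.*2 == 1 %[mod m])].
  by apply/setP => k; rewrite [LHS]in_set [RHS]in_set PA.
have -> : [set k : 'I_m | s ^ (a ^+ k * s) \in S] =
    [set k : 'I_m | (m %| k.*2) || (m %| k.*2.+1)].
  by apply/setP => k; rewrite [LHS]in_set [RHS]in_set PC.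
by rewrite N1 // N2.
Qed.

Lemma cS : #|Xset S [set s] :&: Xsharp S [set s]| = 2%N.
Proof.
have e : Xset S [set s] :&: Xsharp S [set s] = [set x | s ^ x \in S] :&: Xset S [set s].
  apply/setP => w; rewrite !in_setI.
  have -> : (w \in Xsharp S [set s]) = (w \in Xset S [set s]) && (s ^ w \in S).
    by rewrite /Xsharp in_set conjg_set1 sub1set.
  have -> : (w \in [set x | s ^ x \in S]) = (s ^ w \in S) by rewrite in_set.
  by case: (w \in Xset S [set s]); case: (s ^ w \in S).
have cl : forall x, x \in [set x | s ^ x \in S] -> s * x \in [set x | s ^ x \in S].
  by move=> x; rewrite !in_set conjgM (conjgE s s) mulKg.
have sS : s \in S by rewrite !inE eqxx.
have := @halfX [set x | s ^ x \in S] s sS cl.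
rewrite cardT -e; lia.
Qed.

Section W0.
Variable w0 : gT.
Hypothesis hw0 : forall w, (ell S w <= ell S w0)%N.

Lemma maxNX r w : r \in S -> (forall v, ell S v <= ell S w)%N -> w \notin Xset S [set r].
Proof. by move=> rS h; rewrite inX1 -leqNgt h. Qed.

Lemma XU : Xset S [set s] :|: Xset S [set t] = [set~ w0].
Proof.
have sS : s \in S by rewrite !inE eqxx.
have tS : t \in S by rewrite !inE eqxx orbT.
have I : Xset S [set s] :&: Xset S [set t] = [set 1].
  apply/setP => w; rewrite in_setI in_set1; apply/andP/eqP => [[]|->].
    exact: both_desc.
  by split; apply: one_Xset; rewrite sub1set.
apply/eqP; rewrite eqEcard; apply/andP; split.
  apply/subsetP => w; rewrite in_setU in_setC1; apply: contraL => /eqP ->.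
  by rewrite negb_or !maxNX.
have := cardsUI (Xset S [set s]) (Xset S [set t]); rewrite I cards1 cardsC1.
have := cardX sS; have := cardX tS; rewrite -subn1 => h1 h2 h3.
set X1 := #|Xset S [set s]| in h1 h2 h3 *; set X2 := #|Xset S [set t]| in h1 h2 h3 *.
set U := #|_ :|: _| in h3 *; set G := #|gT| in h1 h2 *; lia.
Qed.

Lemma w0V : w0^-1 = w0.
Proof.
have sS : s \in S by rewrite !inE eqxx.
have tS : t \in S by rewrite !inE eqxx orbT.
have h : forall v, (ell S v <= ell S w0^-1)%N by move=> v; rewrite (ell_inv SinvD Sex).
have : w0^-1 \notin Xset S [set s] :|: Xset S [set t].
  by rewrite in_setU negb_or !maxNX.
by rewrite XU in_setC1 negbK => /eqP.
Qed.

Lemma w0_neq1 : w0 != 1.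
Proof.
apply/eqP => e; have := hw0 s; rewrite e (ell1 Sex) leqn0 => /eqP h.
by have := ell_r (r := s); rewrite h !inE eqxx => /(_ isT).
Qed.

Lemma ind_eq w : ((w \in Xset S [set s]) + (w \in Xset S [set t]) = (w != w0) + (w == 1%g))%N.
Proof.
have U : (w \in Xset S [set s]) || (w \in Xset S [set t]) = (w != w0).
  by rewrite -in_setU XU in_setC1.
have I : (w \in Xset S [set s]) && (w \in Xset S [set t]) = (w == 1).
  apply/andP/eqP => [[]|->]; first exact: both_desc.
  by split; apply: one_Xset; rewrite sub1set !inE eqxx ?orbT.
rewrite -U -I.
by case: (w \in Xset S [set s]); case: (w \in Xset S [set t]).
Qed.

End W0.
End Dihedral.

Section GA.
Variable gT : finGroupType.
Local Open Scope ring_scope.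

Lemma sum_ind (a : gT) (F : gT -> algC) : \sum_x (x == a)%:R * F x = F a.
Proof.
rewrite (bigD1 a) //= eqxx mul1r big1 ?addr0 // => x /negPf ->.
by rewrite mul0r.
Qed.

Lemma gdeltaE (g z : gT) : gdelta g z = (z == g)%:R.
Proof. by rewrite ffunE; case: (z == g). Qed.

Lemma gmul_delta_r (a : CW gT) (g : gT) : gmul a (gdelta g) = [ffun z => a (z * g^-1)%g].
Proof.
apply/ffunP => z; rewrite !ffunE.
rewrite -(sum_ind (z * g^-1)%g a); apply: eq_bigr => x _.
rewrite gdeltaE mulrC; congr (_ * _); congr (_%:R); congr (nat_of_bool _).
apply/idP/idP => /eqP h; apply/eqP.
  by rewrite -h invMg invgK mulKVg.
by rewrite h invMg invgK mulgKV.
Qed.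

Lemma gmul_sumr (I : finType) (c : I -> algC) (v : I -> CW gT) (a : CW gT) :
  gmul a (\sum_i c i *: v i) = \sum_i c i *: gmul a (v i).
Proof.
apply/ffunP => z; rewrite ffunE !sum_ffunE.
under eq_bigr => x _ do rewrite sum_ffunE mulr_sumr.
rewrite exchange_big; apply: eq_bigr => i _.
rewrite !ffunE scaler_sumr; apply: eq_bigr => x _; rewrite !ffunE.
by rewrite scalerAr.
Qed.

Lemma gmul_suml (I : finType) (c : I -> algC) (v : I -> CW gT) (b : CW gT) :
  gmul (\sum_i c i *: v i) b = \sum_i c i *: gmul (v i) b.
Proof.
apply/ffunP => z; rewrite ffunE !sum_ffunE.
under eq_bigr => x _ do rewrite sum_ffunE mulr_suml.
rewrite exchange_big; apply: eq_bigr => i _.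
rewrite !ffunE scaler_sumr; apply: eq_bigr => x _; rewrite !ffunE.
by rewrite scalerAl.
Qed.

Lemma expand (v : CW gT) : v = \sum_h v h *: gdelta h.
Proof.
apply/ffunP => z; rewrite sum_ffunE.
rewrite -(sum_ind z v); apply: eq_bigr => h _.
by rewrite [RHS]ffunE gdeltaE eq_sym mulrC.
Qed.

Lemma gmul_assoc_delta (a b : CW gT) g :
  gmul a (gmul b (gdelta g)) = gmul (gmul a b) (gdelta g).
Proof.
rewrite !gmul_delta_r; apply/ffunP => z; rewrite !ffunE.
by apply: eq_bigr => x _; rewrite ffunE mulgA.
Qed.

Lemma gmul_deltas (h g : gT) : gmul (gdelta h) (gdelta g) = gdelta (h * g)%g.
Proof.
rewrite gmul_delta_r; apply/ffunP => z; rewrite !ffunE.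
congr (if _ then _ else _); apply/idP/idP => /eqP hh; apply/eqP.
  by rewrite -hh mulgKV.
by rewrite hh mulgK.
Qed.

Section Trace.
Variable E : CW gT.
Hypothesis hEE : gmul E E = E.

Lemma memU w : gmul E w \in rideal E.
Proof.
rewrite (expand w) gmul_sumr; apply: memv_suml => h _; apply: memvZ.
by apply: memv_span; apply/mapP; exists h; rewrite ?mem_enum.
Qed.

Lemma fixU v : v \in rideal E -> gmul E v = v.
Proof.
move=> vU; have := @coord_span _ _ _ (in_tuple [seq gmul E (gdelta g) | g : gT]) v vU.
move=> ->; rewrite gmul_sumr; apply: eq_bigr => i _; congr (_ *: _).
have : [seq gmul E (gdelta g) | g : gT]`_i \in [seq gmul E (gdelta g) | g : gT].
  by apply: mem_nth; rewrite (ltn_ord i).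
by case/mapP => h _ ->; rewrite gmul_assoc_delta hEE.
Qed.

Lemma rchar_formula g : rchar (rideal E) g = \sum_h E (h * g^-1 * h^-1)%g.
Proof.
set U := rideal E; set B := vbasis U.
have BU : forall i : 'I_(\dim U), B`_i \in U.
  by move=> i; apply: vbasis_mem; apply: mem_nth; rewrite size_tuple.
set phi := fun v => gmul E (gmul v (gdelta g)).
have phiU : forall v, phi v \in U by move=> v; apply: memU.
rewrite /rchar.
have step1 : forall i : 'I_(\dim U), gmul B`_i (gdelta g) = \sum_h B`_i h *: phi (gdelta h).
  move=> i; rewrite {1}(expand B`_i) gmul_suml -[LHS]fixU; last first.
    by rewrite -gmul_suml -expand -(fixU (BU i)) -gmul_assoc_delta memU.
  by rewrite gmul_sumr.
under eq_bigr => i _ do rewrite step1 linear_sum.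
under eq_bigr => i _ do under eq_bigr => h _ do rewrite linearZ.
rewrite exchange_big; apply: eq_bigr => h _.
have := coord_vbasis (phiU (gdelta h)); rewrite -/B => e.
transitivity ((phi (gdelta h)) h).
  rewrite [in RHS]e sum_ffunE; apply: eq_bigr => i _; rewrite ffunE /= mulrC //.
by rewrite /phi gmul_deltas gmul_delta_r ffunE invMg mulgA.
Qed.
End Trace.
End GA.

Section Idem.
Variables (gT : finGroupType) (w0 : gT) (E : CW gT).
Hypotheses (hw0V : (w0^-1 = w0)%g) (hw01 : (w0 != 1)%g).
Local Open Scope ring_scope.
Hypothesis hE : forall z, E z = ((z == 1%g)%:R + (z == w0)%:R) / 2 - (#|gT|%:R)^-1.

Lemma N_neq0 : (#|gT|%:R : algC) != 0.
Proof. by rewrite pnatr_eq0 -lt0n; apply/card_gt0P; exists 1%g. Qed.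

Lemma sumE (F : gT -> algC) :
  \sum_x E x * F x = F 1%g / 2 + F w0 / 2 - (#|gT|%:R)^-1 * \sum_x F x.
Proof.
rewrite mulr_sumr -(sum_ind 1%g (fun x => F x / 2)) -(sum_ind w0 (fun x => F x / 2)).
rewrite -big_split -sumrB; apply: eq_bigr => x _; rewrite hE.
rewrite /=; ring.
Qed.

Lemma sumE0 : \sum_x E x = 0.
Proof.
have := sumE (fun _ => 1); rewrite sumr_const.
under eq_bigr => x _ do rewrite mulr1.
move=> ->; rewrite -[#|gT|%:R]/(#|gT|%:R) mulVf ?N_neq0 //.
by field.
Qed.

Lemma gmul_EE : gmul E E = E.
Proof.
apply/ffunP => z; rewrite ffunE sumE.
have -> : \sum_x E ((x^-1 * z)%g) = 0.
  rewrite (reindex_inj (inj_comp (mulgI z) (@invg_inj gT))) /=.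
  by under eq_bigr => x _ do rewrite invMg invgK mulgKV; rewrite sumE0.
rewrite mulr0 subr0 invg1 mul1g hw0V.
have -> : E (w0 * z)%g = E z.
  rewrite !hE; congr (_ - _); congr (_ / _); rewrite addrC; congr (_ + _).
    congr (_%:R); congr (nat_of_bool _); apply/eqP/eqP => h.
      by apply: (mulgI w0); rewrite h mulg1.
    by rewrite h mulg1.
  congr (_%:R); congr (nat_of_bool _); apply/eqP/eqP => h.
    by rewrite -hw0V; apply: (mulgI w0); rewrite h mulgV.
  by rewrite h -{1}hw0V mulVg.
by field.
Qed.

End Idem.

Lemma sum_pow2 (T : finType) (s t : T) (F : {set T} -> algC) : s != t ->
  (\sum_(L in powerset [set s; t]) F L = F set0 + F [set s] + F [set t] + F [set s; t])%R.
Proof.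
move=> neq.
have e : powerset [set s; t] = set0 |: ([set s] |: ([set t] |: [set [set s; t]])).
  apply/setP => L; rewrite powersetE !inE; apply/idP/idP; last first.
    by case/or4P => /eqP ->; rewrite ?sub0set ?sub1set ?subxx // !inE eqxx ?orbT.
  move=> sub; have hL : forall x, x \in L -> (x == s) || (x == t).
    by move=> x /(subsetP sub); rewrite !inE.
  case sL: (s \in L); case tL: (t \in L).
  - have -> : L = [set s; t]; last by rewrite eqxx !orbT.
    by apply/setP => x; rewrite !inE; apply/idP/idP => [/hL|/orP [] /eqP ->].
  - have -> : L = [set s]; last by rewrite eqxx !orbT.
    apply/setP => x; rewrite !inE; apply/idP/idP => [xL|/eqP -> //].
    by case/orP: (hL x xL) => // /eqP e; move: xL; rewrite e tL.
  - have -> : L = [set t]; last by rewrite eqxx !orbT.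
    apply/setP => x; rewrite !inE; apply/idP/idP => [xL|/eqP -> //].
    by case/orP: (hL x xL) => // /eqP e; move: xL; rewrite e sL.
  - have -> : L = set0; last by rewrite eqxx.
    apply/setP => x; rewrite !inE; apply/negP => xL.
    by case/orP: (hL x xL) => /eqP e; move: xL; rewrite e ?sL ?tL.
have n1 : [set s] != set0 by apply/eqP => /setP /(_ s); rewrite !inE eqxx.
have n2 : [set t] != set0 by apply/eqP => /setP /(_ t); rewrite !inE eqxx.
have n3 : [set s; t] != set0 by apply/eqP => /setP /(_ s); rewrite !inE eqxx.
have n4 : [set s] != [set t] by apply/eqP => /setP /(_ s); rewrite !inE eqxx (negPf neq).
have n5 : [set s] != [set s; t] by apply/eqP => /setP /(_ t); rewrite !inE eqxx orbT eq_sym (negPf neq).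
have n6 : [set t] != [set s; t] by apply/eqP => /setP /(_ s); rewrite !inE eqxx (negPf neq).
rewrite e big_setU1; last by rewrite !inE !negb_or !(eq_sym set0) n1 n2 n3.
rewrite big_setU1; last by rewrite !inE !negb_or n4 n5.
rewrite big_setU1; last by rewrite !inE n6.
by rewrite big_set1 /= !addrA.
Qed.

Lemma set10 (T : finType) (x : T) : ([set x] == set0) = false.
Proof. by apply/negP => /eqP /setP /(_ x); rewrite !inE eqxx. Qed.

Lemma set20 (T : finType) (x y : T) : ([set x; y] == set0) = false.
Proof. by apply/negP => /eqP /setP /(_ x); rewrite !inE eqxx. Qed.

Section Main.
Variables (gT : finGroupType) (s t : gT) (m : nat) (w0 : gT) (e : {set gT} -> CW gT).
Hypotheses (hs : #[s]%g = 2%N) (ht : #[t]%g = 2%N) (hst : #[(s * t)%g]%g = m) (hm : (2 <= m)%N)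
  (hgen : <<[set s; t]>>%g = [set: gT])
  (hw0 : forall w : gT, (ell [set s; t] w <= ell [set s; t] w0)%N)
  (he : forall K : {set gT}, K \subset [set s; t] ->
     xsum [set s; t] K =
       (\sum_(L in powerset [set s; t]) (mcoef [set s; t] K L)%:R *: e L)%R).
Local Open Scope ring_scope.
Local Notation S := [set s; t].

Lemma xsumE (K : {set gT}) (z : gT) : xsum S K z = ((z^-1)%g \in Xset S K)%:R.
Proof.
rewrite /xsum sum_ffunE.
case: (boolP ((z^-1)%g \in Xset S K)) => h.
  rewrite (bigD1 (z^-1)%g) //= big1 ?addr0; first by rewrite invgK ffunE eqxx.
  move=> x /andP [_ nx]; rewrite ffunE; case: eqP => // ez.
  by move: nx; rewrite ez invgK eqxx.
rewrite big1 // => x xX; rewrite ffunE; case: eqP => // ez.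
by move: h; rewrite ez invgK xX.
Qed.

Lemma heq (K : {set gT}) (z : gT) : K \subset S ->
  xsum S K z = \sum_(L in powerset S) (mcoef S K L)%:R * e L z.
Proof.
move=> hK; rewrite (he hK) sum_ffunE; apply: eq_bigr => L _.
by rewrite ffunE.
Qed.

Lemma E_formula (z : gT) : e S z = ((z == 1%g)%:R + (z == w0)%:R) / 2 - (#|gT|%:R)^-1.
Proof.
have sS : s \in S by rewrite !inE eqxx.
have tS : t \in S by rewrite !inE eqxx orbT.
have neq : s != t := s_neq_t ht hst hm.
have sV' := sV hs ht; have tV' := tV hs ht.
have hts : #[(t * s)%g]%g = m by rewrite -hst -orderV invMg sV' tV'.
have hgen' : <<[set t; s]>>%g = [set: gT] by rewrite setUC.
have eSU : [set t; s] = S by rewrite setUC.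
have cSs := cS hs ht hst hm hgen.
have cSt := cS ht hs hts hm hgen'; rewrite eSU in cSt.
have cXs := cardX hs ht hst hm hgen sS.
have cXt := cardX hs ht hst hm hgen tS.
have ind := ind_eq hs ht hst hm hgen hw0 (z^-1)%g.
have w0V' := w0V hs ht hst hm hgen hw0.
have XS := XsetS hs ht hst hm hgen.
have o1 := one_Xsharp hs ht hst hm hgen.
have Nn0 : (#|gT|%:R : algC) != 0 := N_neq0 gT.
have E0 := heq z (sub0set S).
rewrite xsumE Xset0 in_setT sum_pow2 // /mcoef subxx Xset0 Xsharp0 setIT cardsT in E0.
rewrite !subset0 set10 set10 set20 !mul0r !addr0 in E0.
have Sns : (S \subset [set s]) = false.
  by apply/negP => /subsetP /(_ t tS); rewrite inE eq_sym (negPf neq).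
have Snt : (S \subset [set t]) = false.
  by apply/negP => /subsetP /(_ s sS); rewrite inE (negPf neq).
have tns : ([set t] \subset [set s]) = false by rewrite sub1set inE eq_sym (negPf neq).
have snt : ([set s] \subset [set t]) = false by rewrite sub1set inE (negPf neq).
have ssub : [set s] \subset S by rewrite sub1set.
have Es := heq z ssub.
rewrite xsumE sum_pow2 // /mcoef sub0set subxx Xsharp0 setIT cSs tns Sns in Es.
rewrite !mul0r !addr0 in Es.
have tsub : [set t] \subset S by rewrite sub1set.
have Et := heq z tsub.
rewrite xsumE sum_pow2 // /mcoef sub0set subxx Xsharp0 setIT cSt snt Snt in Et.
rewrite !mul0r !addr0 in Et.
have c1 : forall L : {set gT}, L \subset S -> #|[set 1%g] :&: Xsharp S L| = 1%N.
  by move=> L LS; rewrite (setIidPl _) ?cards1 // sub1set o1.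
have ES := heq z (subxx S).
rewrite xsumE sum_pow2 // /mcoef sub0set subxx !sub1set sS tS !XS in_set1 invg_eq1 in ES.
rewrite !c1 ?sub0set ?sub1set ?sS ?tS // !mul1r in ES.
have e0E : e set0 z = (#|gT|%:R)^-1.
  by apply: (mulfI Nn0); rewrite -E0 mulfV.
have XsR : #|Xset S [set s]|%:R = #|gT|%:R / 2 :> algC.
  by rewrite -cXs natrM mulfK // pnatr_eq0.
have XtR : #|Xset S [set t]|%:R = #|gT|%:R / 2 :> algC.
  by rewrite -cXt natrM mulfK // pnatr_eq0.
have indR := congr1 (fun n : nat => n%:R : algC) ind; rewrite /= !natrD in indR.
have e1 : ((z^-1)%g == w0) = (z == w0).
  by rewrite -{1}w0V' (inj_eq invg_inj).
rewrite e1 invg_eq1 in indR.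
have nw : (z != w0)%:R = 1 - (z == w0)%:R :> algC.
  by case: (z == w0); rewrite ?subr0 ?subrr.
rewrite nw in indR.
have eSE : e S z = (z == 1%g)%:R - e set0 z - e [set s] z - e [set t] z.
  by rewrite ES; ring.
have esE : e [set s] z = (((z^-1)%g \in Xset S [set s])%:R - #|Xset S [set s]|%:R * e set0 z) / 2.
  by rewrite Es; field.
have etE : e [set t] z = (((z^-1)%g \in Xset S [set t])%:R - #|Xset S [set t]|%:R * e set0 z) / 2.
  by rewrite Et; field.
have IsE : ((z^-1)%g \in Xset S [set s])%:R = 1 - (z == w0)%:R + (z == 1%g)%:R - ((z^-1)%g \in Xset S [set t])%:R :> algC.
  by rewrite -indR; ring.
rewrite eSE esE etE IsE e0E XsR XtR.
by field.
Qed.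

End Main.

Section Final.
Variables (gT : finGroupType) (w0 : gT) (E : CW gT).
Hypotheses (hw0V : (w0^-1 = w0)%g) (hw01 : (w0 != 1)%g).
Local Open Scope ring_scope.
Hypothesis hE : forall z, E z = ((z == 1%g)%:R + (z == w0)%:R) / 2 - (#|gT|%:R)^-1.

Lemma w0pow i : (w0 ^+ i = if odd i then w0 else 1)%g.
Proof.
elim: i => [|i IH]; first by rewrite expg0.
rewrite expgS IH /=; case: (odd i) => /=; last by rewrite mulg1.
by rewrite -{1}hw0V mulVg.
Qed.

Lemma cyc_w0 : <[w0]>%g = [set 1%g; w0].
Proof.
apply/setP => x; rewrite !inE; apply/idP/idP.
  by case/cycleP => i ->; rewrite w0pow; case: (odd i); rewrite eqxx ?orbT.
by case/orP => /eqP ->; rewrite ?group1 ?cycle_id.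
Qed.

Lemma inv_eqw0 (x : gT) : ((x^-1)%g == w0) = (x == w0).
Proof. by rewrite -{1}hw0V (inj_eq invg_inj). Qed.

Lemma final (g : gT) :
  \sum_h E (h * g^-1 * h^-1)%g =
  #|<[w0]>%G|%:R^-1 * \sum_(y in [set: gT]) (1 : 'CF(<[w0]>%G)) (g ^ y)%g - 1.
Proof.
have c2 : #|<[w0]>%G| = 2%N by rewrite /= cyc_w0 cards2 eq_sym hw01.
rewrite c2 (reindex_inj invg_inj) /=.
under eq_bigr => y _ do rewrite invgK -mulgA -conjgE conjVg hE invg_eq1 inv_eqw0.
under [in RHS]eq_bigl => y do rewrite in_setT.
under [in RHS]eq_bigr => y _ do rewrite cfun1E /= cyc_w0 !inE.
rewrite sumrB sumr_const -mulr_suml mulrC.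
have -> : (#|gT|%:R^-1 *+ #|gT| : algC) = 1 by rewrite -(mulr_natr (#|gT|%:R)^-1) mulVf ?N_neq0.
congr (_ * _ - _); apply: eq_bigr => y _.
case: eqP => [->|_]; last by rewrite add0r.
by rewrite eq_sym (negPf hw01) addr0.
Qed.
End Final.

Theorem corollary5p5 (gT : finGroupType) (s t : gT) (m : nat) (w0 : gT)
  (e : {set gT} -> CW gT) :
  #[s]%g = 2%N -> #[t]%g = 2%N -> #[(s * t)%g]%g = m -> (2 <= m)%N ->
  <<[set s; t]>>%g = [set: gT] ->
  (forall w : gT, (ell [set s; t] w <= ell [set s; t] w0)%N) ->
  (forall K : {set gT}, K \subset [set s; t] ->
     xsum [set s; t] K =
       (\sum_(L in powerset [set s; t]) (mcoef [set s; t] K L)%:R *: e L)%R) ->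
  forall g : gT,
    rchar (rideal (e [set s; t])) g =
      (('Ind[[set: gT]] (1 : 'CF(<[w0]>%G)) - 1)%R : 'CF([set: gT])) g.
Proof.
move=> hs ht hst hm hgen hw0 he g.
have hE := E_formula hs ht hst hm hgen hw0 he.
have w0V' := w0V hs ht hst hm hgen hw0.
have w01 := w0_neq1 hs ht hst hm hgen hw0.
rewrite (rchar_formula (gmul_EE w0V' hE)).
rewrite cfunE cfIndE ?subsetT // cfunE cfun1E inE /=.
exact: final.
Qed.
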